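(* Let $k,n$ be integers with $k\geq 3$ and $n\geq 2$, and let $c$ be an exact $k$-coloring of $\mathcal{B}_n$. Then $\mathcal{B}_n$ contains no rainbow induced copy of $\vee_2$ if and only if one of the following holds: (1) There exists a set $A\subseteq[n]$ with $|A|\leq n-2$ such that each of the three families $\mathcal{B}_{(A,[n])}$, $\mathcal{B}_n\setminus\mathcal{B}_{[A,[n]]}$, and $\{A\}$ is monochromatic, and no two sets from different ones of these families share a color; moreover, if $k=3$ the color of $[n]$ is unrestricted, and if $k=4$ then $[n]$ receives a color different from all colors used on $\mathcal{B}_{[\emptyset,[n])}$. (2) Exactly two colors appear on $\mathcal{B}_{[\emptyset,[n])}$, and $[n]$ receives a color distinct from these two.
   Context: $\mathcal{B}_n$ denotes the Boolean lattice of all subsets of $[n]$ ordered by inclusion. For $X\subseteq Y$: $\mathcal{B}_{[X,Y]}=\{Z: X\subseteq Z\subseteq Y\}$, $\mathcal{B}_{(X,Y]}=\{Z:X\subsetneq Z\subseteq Y\}$, $\mathcal{B}_{[X,Y)}=\{Z:X\subseteq Z\subsetneq Y\}$, $\mathcal{B}_{(X,Y)}=\{Z:X\subsetneq Z\subsetneq Y\}$. An exact $k$-coloring is a surjective map $\mathcal{B}_n\to[k]$. $\vee_2$ is the poset $\{X_0,X_1,X_2\}$ with $X_0<X_1$, $X_0<X_2$, $X_1,X_2$ incomparable; a rainbow induced copy of $\vee_2$ is three sets $X_0\subsetneq X_1$, $X_0\subsetneq X_2$ with $X_1,X_2$ incomparable and pairwise distinct colors. *)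

(* Defs.v *)
From mathcomp Require Import all_boot.
Set Implicit Arguments. Unset Strict Implicit. Unset Printing Implicit Defensive.

(* The Boolean lattice B_n is {set 'I_n}; colors are 'I_k (= [k]). *)

Definition exact_coloring (n k : nat) (c : {set 'I_n} -> 'I_k) : Prop :=
  forall i : 'I_k, exists Z : {set 'I_n}, c Z = i.

Definition rainbow_V2 (n k : nat) (c : {set 'I_n} -> 'I_k) : Prop :=
  exists X0 X1 X2 : {set 'I_n},
    [/\ X0 \proper X1, X0 \proper X2, ~~ (X1 \subset X2), ~~ (X2 \subset X1)
      & [/\ c X0 != c X1, c X0 != c X2 & c X1 != c X2]].

Definition monochromatic (n k : nat) (c : {set 'I_n} -> 'I_k)
  (F : {set 'I_n} -> bool) : Prop :=
  forall X Y, F X -> F Y -> c X = c Y.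

Definition color_disjoint (n k : nat) (c : {set 'I_n} -> 'I_k)
  (F G : {set 'I_n} -> bool) : Prop :=
  forall X Y, F X -> G Y -> c X != c Y.

Definition famB1 n (A : {set 'I_n}) (Z : {set 'I_n}) : bool :=
  (A \proper Z) && (Z \proper setT).
Definition famB2 n (A : {set 'I_n}) (Z : {set 'I_n}) : bool :=
  ~~ (A \subset Z).
Definition famB3 n (A : {set 'I_n}) (Z : {set 'I_n}) : bool :=
  Z == A.

Definition condition1 (n k : nat) (c : {set 'I_n} -> 'I_k) : Prop :=
  exists A : {set 'I_n},
    [/\ #|A| <= n - 2,
        [/\ monochromatic c (famB1 A), monochromatic c (famB2 A) & monochromatic c (famB3 A)],
        [/\ color_disjoint c (famB1 A) (famB2 A),
            color_disjoint c (famB1 A) (famB3 A)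
          & color_disjoint c (famB2 A) (famB3 A)]
      & (k = 4 -> forall Z : {set 'I_n}, Z != setT -> c setT != c Z)].

Definition proper_colors (n k : nat) (c : {set 'I_n} -> 'I_k) : {set 'I_k} :=
  [set c Z | Z in [set Z : {set 'I_n} | Z != setT]].

Definition condition2 (n k : nat) (c : {set 'I_n} -> 'I_k) : Prop :=
  #|proper_colors c| = 2 /\ c setT \notin proper_colors c.

(* Main.v *)
Require Import Defs.
From mathcomp Require Import all_boot.
Set Implicit Arguments. Unset Strict Implicit. Unset Printing Implicit Defensive.

Lemma nr_use n k (c : {set 'I_n} -> 'I_k) : ~ rainbow_V2 c ->
  forall X0 X1 X2 : {set 'I_n}, X0 \proper X1 -> X0 \proper X2 -> ~~ (X1 \subset X2) ->
  ~~ (X2 \subset X1) -> c X0 != c X1 -> c X0 != c X2 -> c X1 != c X2 -> False.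
Proof.
move=> H X0 X1 X2 ? ? ? ? ? ? ?; apply: H; exists X0, X1, X2; by split.
Qed.

Lemma incomp n (A W : {set 'I_n}) w r : w \in W -> w \notin A -> r \notin W ->
  ~~ (A :|: [set r] \subset W) /\ ~~ (W \subset A :|: [set r]).
Proof.
move=> wW wA rW; split.
- apply/subsetPn; exists r => //; by rewrite in_setU set11 orbT.
- apply/subsetPn; exists w => //; rewrite in_setU in_set1 negb_or wA /=.
  apply/eqP => E; by rewrite -E wW in rW.
Qed.

Lemma proper_addr n (A : {set 'I_n}) r : r \notin A -> A \proper A :|: [set r].
Proof.
move=> rA; apply/properP; split; first exact: subsetUl.
exists r => //; by rewrite in_setU set11 orbT.
Qed.

Lemma leq_cardsU (T : finType) (A B : {set T}) : #|A :|: B| <= #|A| + #|B|.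
Proof. by rewrite cardsU leq_subr. Qed.

Lemma card3_le (T : finType) (a b d : T) : #|[set a; b; d]| <= 3.
Proof.
apply: leq_trans (leq_cardsU _ _) _; rewrite cards1 addn1 ltnS.
apply: leq_trans (leq_cardsU _ _) _; by rewrite !cards1.
Qed.

Lemma card2_le (T : finType) (a b : T) : #|[set a; b]| <= 2.
Proof. by rewrite cards2; case: (_ != _). Qed.

Lemma forward3 n k (c : {set 'I_n} -> 'I_k) (Hnr : ~ rainbow_V2 c)
  (Hex : exact_coloring c) (A Z0 : {set 'I_n}) :
  A != setT -> c A != c set0 ->
  (forall D, D != setT -> c D != c set0 -> #|A| <= #|D|) ->
  Z0 != setT -> c Z0 != c set0 -> c Z0 != c A -> condition1 c.
Proof.
move=> AT Ag Amin Z0T Zg ZA.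
have nr := nr_use Hnr.
have A0 : A != set0 by apply/eqP => E; rewrite E eqxx in Ag.
have F1 : forall D : {set 'I_n}, D \proper A -> c D = c set0.
  move=> D DA; apply/eqP; apply: contraT => Dg.
  have DT : D != setT.
    apply/eqP => E; move: DA; by rewrite E properE subsetT andbF.
  have := Amin D DT Dg; have := proper_card DA.
  by move=> h1 h2; have := leq_trans h1 h2; rewrite ltnn.
have AZ : A \proper Z0.
  case: (boolP (Z0 \subset A)) => ZsA.
  - exfalso. case: (eqVneq Z0 A) => [E|NE]; first by rewrite E eqxx in ZA.
    have := F1 Z0; rewrite properEneq NE ZsA => /(_ isT) /eqP.
    by rewrite (negbTE Zg).
  - case: (boolP (A \subset Z0)) => AsZ.
    + rewrite properEneq AsZ andbT; apply/eqP => E; by rewrite E eqxx in ZA.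
    + have Z00 : Z0 != set0 by apply/eqP => E; rewrite E eqxx in Zg.
      exfalso; apply: (nr set0 A Z0) => //; by rewrite ?proper0 // eq_sym.
case/properP: (AZ) => AsZ [z zZ zA].
have [s _ sZ] : exists2 s, s \in setT & s \notin Z0.
  by apply/subsetPn; rewrite subTset.
have sA : s \notin A by apply: contra sZ; apply: (subsetP AsZ).
have prop : forall W V : {set 'I_n}, A \proper W -> A \proper V -> ~~ (W \subset V) ->
    ~~ (V \subset W) -> c W != c set0 -> c W != c A -> c V = c W.
  move=> W V AW AV WV VW Wg WA; apply/eqP; apply/negPn/negP => VW'.
  case: (eqVneq (c V) (c set0)) => Vg.
  - apply: (nr A W V) => //; rewrite ?Vg //; by rewrite eq_sym.
  - have W0 : W != set0 by apply/eqP => E; rewrite E eqxx in Wg.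
    have V0 : V != set0 by apply/eqP => E; rewrite E eqxx in Vg.
    apply: (nr set0 W V) => //; by rewrite ?proper0 // eq_sym.
have base : forall r : 'I_n, r \notin A -> r \notin Z0 -> c (A :|: [set r]) = c Z0.
  move=> r rA rZ; have [h1 h2] := incomp zZ zA rZ.
  by apply: (prop Z0 (A :|: [set r])) => //; exact: proper_addr.
have claimV : forall r : 'I_n, r \notin A -> c (A :|: [set r]) = c Z0.
  move=> r rA; case: (boolP (r \in Z0)) => rZ; last exact: base.
  have Vs := base s sA sZ.
  have sr : r \notin A :|: [set s].
    rewrite in_setU in_set1 negb_or rA /=; apply/eqP => E; by rewrite -E rZ in sZ.
  have sin : s \in A :|: [set s] by rewrite in_setU set11 orbT.
  have [h1 h2] := incomp sin sA sr.
  rewrite (prop (A :|: [set s]) (A :|: [set r])) ?proper_addr //; by rewrite Vs.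
have G2 : forall W : {set 'I_n}, A \proper W -> W != setT -> c W = c Z0.
  move=> W AW WT; case/properP: (AW) => AsW [w wW wA].
  have [r _ rW] : exists2 r, r \in setT & r \notin W.
    by apply/subsetPn; rewrite subTset.
  have rA : r \notin A by apply: contra rW; exact: (subsetP AsW).
  have [h1 h2] := incomp wW wA rW.
  rewrite (prop (A :|: [set r]) W) ?proper_addr ?claimV //.
have G1 : forall D : {set 'I_n}, ~~ (A \subset D) -> c D = c set0.
  move=> D AD; case: (boolP (D \subset A)) => DA.
  - apply: F1; rewrite properEneq DA andbT; apply/eqP => E; by rewrite E subxx in AD.
  - apply/eqP; apply/negPn/negP => Dg.
    have D0 : D != set0 by apply/eqP => E; rewrite E eqxx in Dg.
    case: (eqVneq (c D) (c A)) => DcA.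
    + case/subsetPn: (DA) => d dD dA.
      pose r := if d == z then s else z.
      have rA : r \notin A by rewrite /r; case: eqP.
      have dr : d != r.
        rewrite /r; case: (eqVneq d z) => [->|//].
        apply/eqP => E; by rewrite -E zZ in sZ.
      have dV : d \notin A :|: [set r] by rewrite in_setU in_set1 negb_or dA.
      apply: (nr set0 D (A :|: [set r])).
      * by rewrite proper0.
      * rewrite proper0; apply/set0Pn; exists r; by rewrite in_setU set11 orbT.
      * by apply/subsetPn; exists d.
      * apply: contra AD => h; exact: subset_trans (subsetUl _ _) h.
      * by rewrite eq_sym.
      * by rewrite claimV // eq_sym.
      * by rewrite DcA claimV // eq_sym.
    + apply: (nr set0 A D) => //; by rewrite ?proper0 // eq_sym.
exists A; split.
- have h1 := proper_card AZ.
  have Z0p : Z0 \proper setT by rewrite properT.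
  have h2 := proper_card Z0p.
  move: h2; rewrite cardsT card_ord => h2.
  have h3 : #|A|.+2 <= n by apply: leq_trans h2; rewrite ltnS.
  have n2 : 2 <= n by apply: leq_trans h3.
  by rewrite -(leq_add2r 2) subnK // addn2.
- split.
  + move=> X Y /andP[AX XT] /andP[AY YT]; rewrite (G2 X) ?(G2 Y) // -properT //.
  + move=> X Y hX hY; by rewrite (G1 X) ?(G1 Y).
  + by move=> X Y /eqP-> /eqP->.
- split.
  + move=> X Y /andP[AX XT] hY; rewrite (G2 X) ?(G1 Y) // -?properT //.
  + move=> X Y /andP[AX XT] hY; rewrite (G2 X) ?(eqP hY) // -?properT //.
  + move=> X Y hX hY; rewrite (G1 X) // (eqP hY) eq_sym //.
- move=> k4 Z ZT; apply/eqP => E.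
  have cl : forall Y : {set 'I_n}, Y != setT -> c Y \in [set c A; c Z0; c set0].
    move=> Y YT; case: (boolP (A \subset Y)) => AY.
    + case: (eqVneq Y A) => [->|YA]; first by rewrite !inE eqxx.
      rewrite G2 ?inE ?eqxx ?orbT //; by rewrite properEneq AY andbT eq_sym YA.
    + by rewrite G1 // !inE eqxx !orbT.
  have all : [set: 'I_k] \subset [set c A; c Z0; c set0].
    apply/subsetP => i _; case: (Hex i) => Y <-.
    case: (eqVneq Y setT) => [->|YT]; [rewrite E; exact: cl | exact: cl].
  have := leq_trans (subset_leq_card all) (card3_le _ _ _).
  by rewrite cardsT card_ord k4.
Qed.

Lemma back2 n k (c : {set 'I_n} -> 'I_k) : condition2 c -> ~ rainbow_V2 c.
Proof.
move=> [PC2 _] [X0 [X1 [X2 [p1 p2 s12 s21 [d01 d02 d12]]]]].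
have X1T : X1 != setT by apply/eqP => E; rewrite E subsetT in s21.
have X2T : X2 != setT by apply/eqP => E; rewrite E subsetT in s12.
have X0T : X0 != setT by apply/eqP => E; move: p1; rewrite E properE subsetT andbF.
have mem : forall X : {set 'I_n}, X != setT -> c X \in proper_colors c.
  by move=> X XT; apply/imsetP; exists X; rewrite ?inE.
have /cards2P [a [b [_ E]]] : #|proper_colors c| == 2 by apply/eqP.
have m0 := mem _ X0T; have m1 := mem _ X1T; have m2 := mem _ X2T.
rewrite E in m0 m1 m2.
move: d01 d02 d12.
by case/set2P: m0 => ->; case/set2P: m1 => ->; case/set2P: m2 => ->; rewrite ?eqxx.
Qed.

Lemma back1 n k (c : {set 'I_n} -> 'I_k) : condition1 c -> ~ rainbow_V2 c.
Proof.
move=> [A [_ [m1 m2 m3] _ _]] [X0 [X1 [X2 [p1 p2 s12 s21 [d01 d02 d12]]]]].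
have X1T : X1 != setT by apply/eqP => E; rewrite E subsetT in s21.
have X2T : X2 != setT by apply/eqP => E; rewrite E subsetT in s12.
case: (boolP (A \subset X0)) => AX0.
- have B1 : forall X : {set 'I_n}, X0 \proper X -> X != setT -> famB1 A X.
    move=> X pX XT; rewrite /famB1 properT XT andbT; exact: sub_proper_trans AX0 pX.
  by rewrite (m1 X1 X2) ?eqxx ?B1 in d12.
- have e1 : A \subset X1.
    by apply/negPn/negP => h; rewrite (m2 X0 X1) ?eqxx in d01.
  have e2 : A \subset X2.
    by apply/negPn/negP => h; rewrite (m2 X0 X2) ?eqxx in d02.
  case: (eqVneq X1 A) => [E|N1]; first by rewrite E e2 in s12.
  case: (eqVneq X2 A) => [E|N2]; first by rewrite E e1 in s21.
  have f1 : famB1 A X1 by rewrite /famB1 properT X1T andbT properEneq e1 andbT eq_sym N1.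
  have f2 : famB1 A X2 by rewrite /famB1 properT X2T andbT properEneq e2 andbT eq_sym N2.
  by rewrite (m1 _ _ f1 f2) eqxx in d12.
Qed.

Lemma forward n k (c : {set 'I_n} -> 'I_k) : 3 <= k -> exact_coloring c ->
  ~ rainbow_V2 c -> condition1 c \/ condition2 c.
Proof.
move=> k3 Hex Hnr.
case: (boolP [exists X : {set 'I_n}, (X != setT) && (c X != c set0)]).
- case/existsP => X /andP[XT Xg].
  case: (boolP [exists Y : {set 'I_n}, [&& Y != setT, c Y != c set0 & c Y != c X]]).
  + case/existsP => Y /and3P[YT Yg YX]; left.
    pose P := [pred Z : {set 'I_n} | (Z != setT) && (c Z != c set0)].
    have PX : P X by rewrite inE XT Xg.
    case: (@arg_minnP _ X P (fun Z : {set 'I_n} => #|Z|) PX) => A.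
    rewrite inE => /andP[AT Ag] Amin.
    have Amin' : forall D : {set 'I_n}, D != setT -> c D != c set0 -> #|A| <= #|D|.
      by move=> D DT Dg; apply: Amin; rewrite inE DT Dg.
    case: (eqVneq (c X) (c A)) => XA.
    * apply: (forward3 Hnr Hex AT Ag Amin' YT Yg); by rewrite -XA.
    * exact: (forward3 Hnr Hex AT Ag Amin' XT Xg XA).
  + move/existsPn => HY; right.
    have s0T : (set0 : {set 'I_n}) != setT.
      apply/eqP => E; move: Xg.
      have -> : X = set0 by apply/eqP; rewrite -subset0 E subsetT.
      by rewrite eqxx.
    have PC : proper_colors c = [set c set0; c X].
      apply/eqP; rewrite eqEsubset; apply/andP; split.
      * apply/subsetP => i /imsetP [Y]; rewrite inE => YT ->.
        case: (eqVneq (c Y) (c set0)) => [->|Yg]; first by rewrite !inE eqxx.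
        have := HY Y; rewrite YT Yg /= negbK => /eqP ->; by rewrite !inE eqxx orbT.
      * apply/subsetP => i; rewrite !inE => /orP[]/eqP->; apply/imsetP;
          [exists set0 | exists X] => //; by rewrite inE.
    split; first by rewrite PC cards2 eq_sym Xg.
    have : ~~ ([set: 'I_k] \subset [set c set0; c X]).
      apply/negP => /subset_leq_card; rewrite cardsT card_ord => h.
      by have := leq_trans k3 (leq_trans h (card2_le _ _)).
    case/subsetPn => i _ ni.
    case: (Hex i) => Y Yi.
    case: (eqVneq Y setT) => [YT|YT].
    * by rewrite PC -YT Yi.
    * exfalso; move: ni; rewrite -Yi -PC.
      by rewrite (_ : c Y \in proper_colors c) //; apply/imsetP; exists Y; rewrite ?inE.
- move/existsPn => H0; exfalso.
  have : [set: 'I_k] \subset [set c set0; c setT].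
    apply/subsetP => i _; case: (Hex i) => Y <-.
    case: (eqVneq Y setT) => [->|YT]; first by rewrite !inE eqxx orbT.
    have := H0 Y; rewrite YT /= negbK => /eqP ->; by rewrite !inE eqxx.
  move/subset_leq_card; rewrite cardsT card_ord => h.
  by have := leq_trans k3 (leq_trans h (card2_le _ _)).
Qed.

Theorem theorem2p3 (k n : nat) (c : {set 'I_n} -> 'I_k) :
  3 <= k -> 2 <= n -> exact_coloring c ->
  (~ rainbow_V2 c <-> (condition1 c \/ condition2 c)).
Proof.
move=> k3 n2 Hex; split; first exact: forward.
by case; [exact: back1 | exact: back2].
Qed.
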